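(* Let $\mathcal E$ be a relation on closed values and $t_0,t_1$ closed terms with $t_0\approx^p_{\mathcal E}t_1$. Then for every closed evaluation context $F$, $F[t_0]\approx^p_{\mathcal E}F[t_1]$.
   Context: Terms of $\lambda_S$: $t ::= x \mid \lambda x.t \mid t\,t \mid \mathcal{S}k.t \mid \langle t\rangle$ (shift binds $k$; $\langle\cdot\rangle$ reset), up to $\alpha$-conversion. Values $v::=\lambda x.t$. Pure contexts $E ::= \Box \mid v\,E \mid E\,t$; evaluation contexts $F ::= \Box \mid v\,F \mid F\,t \mid \langle F\rangle$. Reduction: $F[(\lambda x.t)v]\to F[t\{v/x\}]$; $F[\langle E[\mathcal Sk.t]\rangle]\to F[\langle t\{\lambda x.\langle E[x]\rangle/k\}\rangle]$ ($x\notin\mathrm{fv}(E)$); $F[\langle v\rangle]\to F[v]$; $\to^*$ reflexive-transitive closure. Program: term $\langle t\rangle$ (ranged over by $p$). Closures: for $R$ a relation on closed terms, $\widetilde R$ is the smallest relation containing $R$, all $(x,x)$, closed under all term constructors, restricted to closed terms; $\widehat R$ is the smallest relation on closed evaluation contexts with $\Box\widehat R\Box$, $v_0F_0\widehat Rv_1F_1$ if $F_0\widehat RF_1,v_0\widetilde Rv_1$; $F_0t_0\widehat RF_1t_1$ if $F_0\widehat RF_1,t_0\widetilde Rt_1$; $\langle F_0\rangle\widehat R\langle F_1\rangle$ if $F_0\widehat RF_1$. Environmental bisimilarity for programs: an environment $\mathcal E$ is a relation on closed values; an environmental relation $\mathcal X$ is a set of environments and triples $(\mathcal E,t_0,t_1)$,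 $t_0,t_1$ closed, written $t_0\mathcal X_{\mathcal E}t_1$. $\mathcal X$ is an environmental bisimulation for programs if (1) if $t_0\mathcal X_{\mathcal E}t_1$ and $t_0,t_1$ are not both programs, then for all pure $E_0\widehat{\mathcal E}E_1$, $\langle E_0[t_0]\rangle\mathcal X_{\mathcal E}\langle E_1[t_1]\rangle$; (2) if $p_0\mathcal X_{\mathcal E}p_1$: (a) $p_0\to p_0'$ (program) implies $p_1\to^*p_1'$ (program) with $p_0'\mathcal X_{\mathcal E}p_1'$; (b) $p_0\to v_0$ implies $p_1\to^*v_1$ and $\{(v_0,v_1)\}\cup\mathcal E\in\mathcal X$; (c) symmetric conditions; (3) for $\mathcal E\in\mathcal X$, $(\lambda x.t_0)\mathcal E(\lambda x.t_1)$ and $v_0\widetilde{\mathcal E}v_1$ imply $t_0\{v_0/x\}\mathcal X_{\mathcal E}t_1\{v_1/x\}$. $\approx^p$ is the largest such relation; $t_0\approx^p_{\mathcal E}t_1$ means $(\mathcal E,t_0,t_1)\in\approx^p$. *)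

(* Defs.v *)
From Stdlib Require Import Arith Relations.

Inductive term : Type :=
| Var   : nat -> term
| Lam   : term -> term
| App   : term -> term -> term
| Shift : term -> term            (* S k. t : binds k = index 0 *)
| Reset : term -> term.

Definition is_value (t : term) : Prop :=
  match t with Lam _ => True | _ => False end.

Definition is_program (t : term) : Prop :=
  match t with Reset _ => True | _ => False end.

Fixpoint closed_at (n : nat) (t : term) : Prop :=
  match t with
  | Var k => k < n
  | Lam b => closed_at (S n) b
  | App a b => closed_at n a /\ closed_at n b
  | Shift b => closed_at (S n) b
  | Reset b => closed_at n b
  end.

Definition closed (t : term) : Prop := closed_at 0 t.

Fixpoint lift (d c : nat) (t : term) : term :=
  match t with
  | Var n => if n <? c then Var n else Var (n + d)
  | Lam b => Lam (lift d (S c) b)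
  | App a b => App (lift d c a) (lift d c b)
  | Shift b => Shift (lift d (S c) b)
  | Reset b => Reset (lift d c b)
  end.

(* subst k u t = t{u / index k} (indices above k are decremented) *)
Fixpoint subst (k : nat) (u : term) (t : term) : term :=
  match t with
  | Var n => if n =? k then lift k 0 u
             else if k <? n then Var (pred n) else Var n
  | Lam b => Lam (subst (S k) u b)
  | App a b => App (subst k u a) (subst k u b)
  | Shift b => Shift (subst (S k) u b)
  | Reset b => Reset (subst k u b)
  end.

(* evaluation contexts F ::= [] | v F | F t | <F>;
   CAppR b F stands for (Lam b) F. *)
Inductive ctx : Type :=
| Hole  : ctx
| CAppR : term -> ctx -> ctx
| CAppL : ctx -> term -> ctx
| CReset : ctx -> ctx.

Fixpoint plug (F : ctx) (t : term) : term :=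
  match F with
  | Hole => t
  | CAppR b F => App (Lam b) (plug F t)
  | CAppL F u => App (plug F t) u
  | CReset F => Reset (plug F t)
  end.

Fixpoint pure (F : ctx) : Prop :=
  match F with
  | Hole => True
  | CAppR _ F => pure F
  | CAppL F _ => pure F
  | CReset _ => False
  end.

Fixpoint liftC (d c : nat) (F : ctx) : ctx :=
  match F with
  | Hole => Hole
  | CAppR b F => CAppR (lift d (S c) b) (liftC d c F)
  | CAppL F u => CAppL (liftC d c F) (lift d c u)
  | CReset F => CReset (liftC d c F)
  end.

Fixpoint closed_ctx (F : ctx) : Prop :=
  match F with
  | Hole => True
  | CAppR b F => closed (Lam b) /\ closed_ctx F
  | CAppL F u => closed_ctx F /\ closed u
  | CReset F => closed_ctx F
  end.

Inductive step : term -> term -> Prop :=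
| step_beta : forall F b v, is_value v ->
    step (plug F (App (Lam b) v)) (plug F (subst 0 v b))
| step_shift : forall F E b, pure E ->
    step (plug F (Reset (plug E (Shift b))))
         (plug F (Reset (subst 0 (Lam (Reset (plug (liftC 1 0 E) (Var 0)))) b)))
| step_reset : forall F v, is_value v ->
    step (plug F (Reset v)) (plug F v).

Definition steps : term -> term -> Prop := clos_refl_trans term step.

Definition rel := term -> term -> Prop.

Inductive tilde_open (R : rel) : rel :=
| tl_base  : forall t0 t1, R t0 t1 -> tilde_open R t0 t1
| tl_var   : forall x, tilde_open R (Var x) (Var x)
| tl_lam   : forall t0 t1, tilde_open R t0 t1 -> tilde_open R (Lam t0) (Lam t1)
| tl_app   : forall a0 a1 b0 b1, tilde_open R a0 a1 -> tilde_open R b0 b1 ->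
               tilde_open R (App a0 b0) (App a1 b1)
| tl_shift : forall t0 t1, tilde_open R t0 t1 -> tilde_open R (Shift t0) (Shift t1)
| tl_reset : forall t0 t1, tilde_open R t0 t1 -> tilde_open R (Reset t0) (Reset t1).

Definition tilde (R : rel) : rel :=
  fun t0 t1 => tilde_open R t0 t1 /\ closed t0 /\ closed t1.

Inductive hat (R : rel) : ctx -> ctx -> Prop :=
| hat_hole  : hat R Hole Hole
| hat_appR  : forall b0 b1 F0 F1, hat R F0 F1 -> tilde R (Lam b0) (Lam b1) ->
                hat R (CAppR b0 F0) (CAppR b1 F1)
| hat_appL  : forall F0 F1 t0 t1, hat R F0 F1 -> tilde R t0 t1 ->
                hat R (CAppL F0 t0) (CAppL F1 t1)
| hat_reset : forall F0 F1, hat R F0 F1 -> hat R (CReset F0) (CReset F1).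

Definition is_env (E : rel) : Prop :=
  forall v0 v1, E v0 v1 ->
    is_value v0 /\ is_value v1 /\ closed v0 /\ closed v1.

(* an environmental relation: a set of environments and a set of triples *)
Record envrel : Type := {
  X_env : rel -> Prop;
  X_tri : rel -> term -> term -> Prop
}.

Definition add_pair (v0 v1 : term) (E : rel) : rel :=
  fun a b => (a = v0 /\ b = v1) \/ E a b.

Definition is_bisim_p (X : envrel) : Prop :=
  (forall E, X_env X E -> is_env E) /\
  (forall E t0 t1, X_tri X E t0 t1 -> is_env E /\ closed t0 /\ closed t1) /\
  (* (1) *)
  (forall E t0 t1, X_tri X E t0 t1 -> ~ (is_program t0 /\ is_program t1) ->
     forall E0 E1, pure E0 -> pure E1 -> hat E E0 E1 ->
       X_tri X E (Reset (plug E0 t0)) (Reset (plug E1 t1))) /\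
  (* (2) *)
  (forall E p0 p1, X_tri X E p0 p1 -> is_program p0 -> is_program p1 ->
     (forall p0', step p0 p0' -> is_program p0' ->
        exists p1', steps p1 p1' /\ is_program p1' /\ X_tri X E p0' p1') /\
     (forall v0, step p0 v0 -> is_value v0 ->
        exists v1, steps p1 v1 /\ is_value v1 /\ X_env X (add_pair v0 v1 E)) /\
     (forall p1', step p1 p1' -> is_program p1' ->
        exists p0', steps p0 p0' /\ is_program p0' /\ X_tri X E p0' p1') /\
     (forall v1, step p1 v1 -> is_value v1 ->
        exists v0, steps p0 v0 /\ is_value v0 /\ X_env X (add_pair v0 v1 E))) /\
  (* (3) *)
  (forall E, X_env X E ->
     forall b0 b1, E (Lam b0) (Lam b1) ->
     forall v0 v1, is_value v0 -> is_value v1 -> tilde E v0 v1 ->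
       X_tri X E (subst 0 v0 b0) (subst 0 v1 b1)).

Definition approx_p_tri (E : rel) (t0 t1 : term) : Prop :=
  exists X, is_bisim_p X /\ X_tri X E t0 t1.

Definition approx_p_env (E : rel) : Prop :=
  exists X, is_bisim_p X /\ X_env X E.

(* Main.v *)
Require Import Defs.
From Stdlib Require Import Arith Lia Relations FunctionalExtensionality PropExtensionality.

Fixpoint comp (G H : ctx) : ctx :=
  match G with
  | Hole => H
  | CAppR b G => CAppR b (comp G H)
  | CAppL G u => CAppL (comp G H) u
  | CReset G => CReset (comp G H)
  end.

Lemma plug_comp : forall G H t, plug (comp G H) t = plug G (plug H t).
Proof. induction G; simpl; intros; f_equal; auto. Qed.

Lemma closed_at_mono : forall t n m, closed_at n t -> n <= m -> closed_at m t.
Proof.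
  induction t; simpl; intros n0 m H Hle; try tauto; try lia.
  - eapply IHt; eauto; lia.
  - split; [eapply IHt1|eapply IHt2]; eauto; tauto.
  - eapply IHt; eauto; lia.
  - eapply IHt; eauto.
Qed.

Lemma lift_closed : forall t d c, closed_at c t -> lift d c t = t.
Proof.
  induction t; simpl; intros d c H.
  - destruct (Nat.ltb_spec n c); auto; lia.
  - f_equal; auto.
  - f_equal; [apply IHt1|apply IHt2]; tauto.
  - f_equal; auto.
  - f_equal; auto.
Qed.

Lemma subst_closed : forall t k u, closed_at k t -> subst k u t = t.
Proof.
  induction t; simpl; intros k u H.
  - destruct (Nat.eqb_spec n k); [lia|]. destruct (Nat.ltb_spec k n); auto; lia.
  - f_equal; auto.
  - f_equal; [apply IHt1|apply IHt2]; tauto.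
  - f_equal; auto.
  - f_equal; auto.
Qed.

Lemma closed_subst : forall b n k u, closed_at (S n) b -> k <= n -> closed u ->
  closed_at n (subst k u b).
Proof.
  induction b; simpl; intros n0 k u H Hk Hu.
  - destruct (Nat.eqb_spec n k).
    + rewrite lift_closed. eapply closed_at_mono; eauto; lia. eapply closed_at_mono; eauto; lia.
    + destruct (Nat.ltb_spec k n); simpl; lia.
  - apply IHb; auto; lia.
  - split; [apply IHb1|apply IHb2]; tauto.
  - apply IHb; auto; lia.
  - apply IHb; auto.
Qed.

Fixpoint closed_ctx_at (n : nat) (F : ctx) : Prop :=
  match F with
  | Hole => True
  | CAppR b F => closed_at (S n) b /\ closed_ctx_at n F
  | CAppL F u => closed_ctx_at n F /\ closed_at n u
  | CReset F => closed_ctx_at n F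
  end.

Lemma closed_ctx_at0 : forall F, closed_ctx F <-> closed_ctx_at 0 F.
Proof. induction F; simpl; unfold closed; simpl; tauto. Qed.

Lemma closed_plug_at : forall F n t, closed_ctx_at n F -> closed_at n t -> closed_at n (plug F t).
Proof. induction F; simpl; intros; intuition. Qed.

Lemma closed_plug_inv_at : forall F n t, closed_at n (plug F t) -> closed_ctx_at n F /\ closed_at n t.
Proof. induction F; simpl; intros n0 t0 H.
  - tauto.
  - destruct H as [H1 H2]. apply IHF in H2. tauto.
  - destruct H as [H1 H2]. apply IHF in H1. tauto.
  - apply IHF in H. tauto. Qed.

Lemma closed_plug : forall F t, closed_ctx F -> closed t -> closed (plug F t).
Proof. intros. apply closed_plug_at; auto. apply closed_ctx_at0; auto. Qed.

Lemma closed_plug_inv : forall F t, closed (plug F t) -> closed_ctx F /\ closed t.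
Proof. intros. apply closed_plug_inv_at in H. rewrite closed_ctx_at0. auto. Qed.

Lemma closed_ctx_mono : forall F n m, closed_ctx_at n F -> n <= m -> closed_ctx_at m F.
Proof. induction F; simpl; intros; intuition eauto.
  all: eapply closed_at_mono; eauto; lia. Qed.

Lemma liftC_closed : forall F d c, closed_ctx_at c F -> liftC d c F = F.
Proof. induction F; simpl; intros; f_equal; intuition auto using lift_closed. Qed.

Lemma plug_value : forall F x, is_value (plug F x) -> F = Hole /\ is_value x.
Proof. destruct F; simpl; intros; tauto. Qed.

Lemma comp_hole : forall F, comp F Hole = F.
Proof. induction F; simpl; f_equal; auto. Qed.

Lemma pure_comp : forall G H, pure (comp G H) -> pure H.
Proof. induction G; simpl; auto. intros; tauto. Qed.

Lemma plug_inj : forall F G a b, ~ is_value a -> ~ is_value b -> plug F a = plug G b ->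
  (exists H, F = comp G H /\ b = plug H a) \/ (exists H, G = comp F H /\ a = plug H b).
Proof.
  induction F; intros G a b Ha Hb Heq.
  - right. exists G. simpl in *. auto.
  - destruct G; simpl in *.
    + left. exists (CAppR t F). auto.
    + injection Heq; intros H1 H2; subst. destruct (IHF G a b Ha Hb H1) as [[H [-> ->]]|[H [-> ->]]].
      * left; exists H; auto.
      * right; exists H; auto.
    + injection Heq; intros H1 H2. exfalso. assert (is_value (plug G b)) by (rewrite <- H2; exact I).
      apply plug_value in H. tauto.
    + discriminate.
  - destruct G; simpl in *.
    + left. exists (CAppL F t). auto.
    + injection Heq; intros H1 H2. exfalso. assert (is_value (plug F a)) by (rewrite H2; exact I).
      apply plug_value in H. tauto.
    + injection Heq; intros H1 H2; subst. destruct (IHF G a b Ha Hb H2) as [[H [-> ->]]|[H [-> ->]]].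
      * left; exists H; auto.
      * right; exists H; auto.
    + discriminate.
  - destruct G; simpl in *; try discriminate.
    + left. exists (CReset F). auto.
    + injection Heq; intros H1. destruct (IHF G a b Ha Hb H1) as [[H [-> ->]]|[H [-> ->]]].
      * left; exists H; auto.
      * right; exists H; auto.
Qed.

Lemma step_plug : forall a b G, step a b -> step (plug G a) (plug G b).
Proof.
  intros a b G H. destruct H; rewrite <- !plug_comp; constructor; auto.
Qed.

Lemma steps_plug : forall a b G, steps a b -> steps (plug G a) (plug G b).
Proof.
  intros a b G H. induction H.
  - apply rt_step. apply step_plug; auto.
  - apply rt_refl.
  - eapply rt_trans; eauto.
Qed.

Lemma plug_nonval : forall F x, ~ is_value x -> ~ is_value (plug F x).
Proof. intros F x H H'. apply plug_value in H'. tauto. Qed.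

Lemma step_ctx_inv : forall G q r, step (plug G (Reset q)) r ->
  exists r', step (Reset q) r' /\ r = plug G r'.
Proof.
  intros G q r Hs. inversion Hs; subst.
  - destruct (plug_inj F G (App (Lam b) v) (Reset q)) as [[K [-> Hq]]|[K [-> Hr]]]; auto; try (simpl; tauto).
    + exists (plug K (subst 0 v b)). rewrite Hq, plug_comp. split; auto. constructor; auto.
    + destruct K; simpl in Hr; try discriminate.
      * injection Hr; intros; subst; exfalso; eapply plug_nonval; [|eassumption]; simpl; auto.
      * injection Hr; intros; exfalso; match goal with H: Lam _ = plug _ _ |- _ =>
          eapply (plug_nonval K (Reset q)); [simpl;auto| rewrite <- H; exact I] end.
  - destruct (plug_inj F G (Reset (plug E (Shift b))) (Reset q)) as [[K [-> Hq]]|[K [-> Hr]]]; auto; try (simpl; tauto).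
    + eexists. rewrite Hq, plug_comp. split; [|reflexivity]. constructor; auto.
    + destruct K; simpl in Hr; try discriminate.
      * injection Hr; intros; subst. eexists. split; [|rewrite comp_hole; reflexivity]. apply (step_shift Hole); auto.
      * injection Hr; intros Hr'.
        destruct (plug_inj E K (Shift b) (Reset q)) as [[K2 [HE Hq]]|[K2 [HE Hq]]]; auto; try (simpl; tauto).
        -- subst E. apply pure_comp in H0. destruct K2; simpl in *; try discriminate; tauto.
        -- destruct K2; simpl in *; discriminate.
  - destruct (plug_inj F G (Reset v) (Reset q)) as [[K [-> Hq]]|[K [-> Hr]]]; auto; try (simpl; tauto).
    + exists (plug K v). rewrite Hq, plug_comp. split; auto. constructor; auto.
    + destruct K; simpl in Hr; try discriminate.
      * injection Hr; intros; subst. eexists. split; [|rewrite comp_hole; reflexivity]. apply (step_reset Hole); auto.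
      * injection Hr; intros; subst; exfalso; eapply plug_nonval; [|eassumption]; simpl; auto.
Qed.

Lemma step_program : forall q r, step (Reset q) r -> is_program r \/ (is_value r /\ q = r).
Proof.
  intros q r Hs. inversion Hs; subst.
  - destruct F; simpl in *; try discriminate. left; exact I.
  - destruct F; simpl in *; try discriminate; left; exact I.
  - destruct F; simpl in *; try discriminate.
    + right. injection H; auto.
    + left; exact I.
Qed.

Lemma step_closed : forall s r, step s r -> closed s -> closed r.
Proof.
  intros s r Hs Hc. destruct Hs.
  - apply closed_plug_inv in Hc as [HF Ht]. apply closed_plug; auto.
    unfold closed in *; simpl in Ht. destruct Ht. apply closed_subst; auto.
  - apply closed_plug_inv in Hc as [HF Ht]. apply closed_plug; auto.
    unfold closed in *; simpl in Ht. apply closed_plug_inv_at in Ht as [HE Hb]. simpl in Hb.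
    simpl. apply closed_subst; auto. unfold closed; simpl.
    rewrite liftC_closed by auto. apply closed_plug_at; simpl; auto.
    eapply closed_ctx_mono; eauto.
  - apply closed_plug_inv in Hc as [HF Ht]. apply closed_plug; auto.
Qed.

Lemma steps_closed : forall s r, steps s r -> closed s -> closed r.
Proof. intros s r H. induction H; eauto using step_closed. Qed.

Ltac tlc := first [apply tl_var | apply tl_lam | apply tl_app | apply tl_shift | apply tl_reset].

Inductive hato (R : rel) : ctx -> ctx -> Prop :=
| ho_hole  : hato R Hole Hole
| ho_appR  : forall b0 b1 F0 F1, hato R F0 F1 -> tilde_open R (Lam b0) (Lam b1) ->
                hato R (CAppR b0 F0) (CAppR b1 F1)
| ho_appL  : forall F0 F1 t0 t1, hato R F0 F1 -> tilde_open R t0 t1 ->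
                hato R (CAppL F0 t0) (CAppL F1 t1)
| ho_reset : forall F0 F1, hato R F0 F1 -> hato R (CReset F0) (CReset F1).

Lemma hat_hato : forall R F0 F1, hat R F0 F1 <-> hato R F0 F1 /\ closed_ctx F0 /\ closed_ctx F1.
Proof.
  split.
  - induction 1; simpl; unfold tilde in *; intuition; constructor; tauto.
  - intros [H [H0 H1]]. induction H; simpl in *; constructor; unfold tilde; intuition.
Qed.

Lemma tl_refl : forall R t, tilde_open R t t.
Proof. induction t; [apply tl_var | apply tl_lam | apply tl_app | apply tl_shift | apply tl_reset]; auto. Qed.

Lemma hato_refl : forall R F, hato R F F.
Proof. induction F; constructor; auto using tl_refl. Qed.

Lemma tl_mono : forall (R S : rel), (forall a b, R a b -> tilde_open S a b) ->
  forall x y, tilde_open R x y -> tilde_open S x y.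
Proof. intros R S H x y Ht. induction Ht; try tlc; auto. Qed.

Lemma hato_mono : forall (R S : rel), (forall a b, R a b -> tilde_open S a b) ->
  forall x y, hato R x y -> hato S x y.
Proof. intros R S H x y Ht. induction Ht; constructor; eauto using tl_mono. Qed.

Lemma hato_plug : forall R F0 F1 a0 a1, hato R F0 F1 -> tilde_open R a0 a1 ->
  tilde_open R (plug F0 a0) (plug F1 a1).
Proof. intros. induction H; simpl; auto; first [apply tl_app | apply tl_reset]; auto. Qed.

Lemma hato_comp : forall R G0 G1 H0 H1, hato R G0 G1 -> hato R H0 H1 ->
  hato R (comp G0 H0) (comp G1 H1).
Proof. intros. induction H; simpl; try constructor; auto. Qed.

Lemma hato_pure : forall R P0 P1, hato R P0 P1 -> pure P0 -> pure P1.
Proof. induction 1; simpl; auto. Qed.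

Lemma hato_pure' : forall R P0 P1, hato R P0 P1 -> pure P1 -> pure P0.
Proof. induction 1; simpl; auto. Qed.

Lemma pure_dec : forall F, {pure F} + {~ pure F}.
Proof. induction F; simpl; auto. Qed.

Lemma hato_split : forall R G0 G1, hato R G0 G1 -> ~ pure G0 ->
  exists G0' G1' P0 P1, G0 = comp G0' (CReset P0) /\ G1 = comp G1' (CReset P1) /\
    hato R G0' G1' /\ hato R P0 P1 /\ pure P0 /\ pure P1.
Proof.
  induction 1; simpl; intros Hp.
  - tauto.
  - destruct (IHhato Hp) as (G0' & G1' & P0 & P1 & -> & -> & ? & ? & ? & ?).
    exists (CAppR b0 G0'), (CAppR b1 G1'), P0, P1. simpl; repeat split; auto; constructor; auto.
  - destruct (IHhato Hp) as (G0' & G1' & P0 & P1 & -> & -> & ? & ? & ? & ?).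
    exists (CAppL G0' t0), (CAppL G1' t1), P0, P1. simpl; repeat split; auto; constructor; auto.
  - destruct (pure_dec F0) as [Hp0|Hp0].
    + exists Hole, Hole, F0, F1. simpl; repeat split; auto; try constructor; eauto using hato_pure.
    + destruct (IHhato Hp0) as (G0' & G1' & P0 & P1 & -> & -> & ? & ? & ? & ?).
      exists (CReset G0'), (CReset G1'), P0, P1. simpl; repeat split; auto; constructor; auto.
Qed.

Section Env.
Variable R : rel.
Hypothesis HR : is_env R.

Lemma tl_value : forall a b, tilde_open R a b -> is_value a -> is_value b.
Proof. intros a b H; destruct H; simpl; auto; intros; apply HR in H; tauto. Qed.

Lemma tl_value' : forall a b, tilde_open R a b -> is_value b -> is_value a.
Proof. intros a b H; destruct H; simpl; auto; intros; apply HR in H; tauto. Qed.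

Lemma tl_program : forall a b, tilde_open R a b -> is_program a -> is_program b.
Proof. intros a b H; destruct H; simpl; auto; intros; apply HR in H;
  destruct t0; simpl in *; tauto. Qed.

Lemma tl_program' : forall a b, tilde_open R a b -> is_program b -> is_program a.
Proof. intros a b H; destruct H; simpl; auto; intros; apply HR in H;
  destruct t1; simpl in *; tauto. Qed.

Lemma tl_lift : forall a b, tilde_open R a b -> forall d c, tilde_open R (lift d c a) (lift d c b).
Proof.
  induction 1; intros d c; simpl; try tlc; auto.
  - pose proof (HR _ _ H) as (_ & _ & H0 & H1). rewrite !lift_closed; try apply tl_base; auto;
    eapply closed_at_mono; eauto; lia.
  - destruct (x <? c); tlc.
Qed.

Lemma tl_subst : forall b0 b1, tilde_open R b0 b1 -> forall u0 u1 k, tilde_open R u0 u1 ->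
  closed u0 -> closed u1 -> tilde_open R (subst k u0 b0) (subst k u1 b1).
Proof.
  induction 1; intros u0 u1 k Hu Hc0 Hc1; simpl; try tlc; auto.
  - pose proof (HR _ _ H) as (_ & _ & H0 & H1). rewrite !subst_closed; try apply tl_base; auto;
    eapply closed_at_mono; eauto; lia.
  - destruct (x =? k). rewrite !lift_closed; auto.
    destruct (k <? x); tlc.
Qed.

Lemma tl_decomp : forall F a t1, tilde_open R (plug F a) t1 -> ~ is_value a ->
  exists F1 a1, t1 = plug F1 a1 /\ hato R F F1 /\ tilde_open R a a1.
Proof.
  induction F; simpl; intros a t1 Ht Ha.
  - exists Hole, t1. repeat split; auto. constructor.
  - inversion Ht; subst.
    + match goal with H : R _ _ |- _ => apply HR in H; simpl in H; tauto end.
    + match goal with Hp : tilde_open R (plug F a) ?y |- _ =>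
        destruct (IHF a y Hp Ha) as (F1 & a1' & -> & ? & ?) end.
      match goal with Hl : tilde_open R (Lam t) ?w |- _ => inversion Hl; subst end.
      * match goal with H : R _ ?w |- _ =>
          pose proof (HR _ _ H) as (_ & Hv & _); destruct w; simpl in Hv; try tauto end.
        eexists (CAppR _ F1), a1'. simpl; repeat split; eauto. constructor; auto.
      * eexists (CAppR _ F1), a1'. simpl; repeat split; auto. constructor; auto.
  - inversion Ht; subst.
    + match goal with H : R _ _ |- _ => apply HR in H; simpl in H; tauto end.
    + match goal with Hp : tilde_open R (plug F a) ?y |- _ =>
        destruct (IHF a y Hp Ha) as (F1 & a1' & -> & ? & ?) end.
      eexists (CAppL F1 _), a1'. simpl; repeat split; eauto. constructor; auto.
  - inversion Ht; subst.
    + match goal with H : R _ _ |- _ => apply HR in H; simpl in H; tauto end.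
    + match goal with Hp : tilde_open R (plug F a) ?y |- _ =>
        destruct (IHF a y Hp Ha) as (F1 & a1' & -> & ? & ?) end.
      exists (CReset F1), a1'. simpl; repeat split; auto. constructor; auto.
Qed.

End Env.

Definition inv (R : rel) : rel := fun a b => R b a.

Lemma tl_inv : forall R a b, tilde_open R a b -> tilde_open (inv R) b a.
Proof. induction 1; try tlc; auto. apply tl_base; auto. Qed.

Lemma hato_inv : forall R a b, hato R a b -> hato (inv R) b a.
Proof. induction 1; constructor; auto using tl_inv. Qed.

Lemma hat_inv : forall R a b, hat R a b -> hat (inv R) b a.
Proof. intros. apply hat_hato in H. apply hat_hato. intuition. apply hato_inv; auto. Qed.

Lemma tilde_inv : forall R a b, tilde R a b -> tilde (inv R) b a.
Proof. unfold tilde; intuition. apply tl_inv; auto. Qed.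

Lemma is_env_inv : forall R, is_env R -> is_env (inv R).
Proof. unfold is_env, inv; intros. apply H in H0; tauto. Qed.

Lemma tl_app_inv : forall R, is_env R -> forall a b t, tilde_open R (App a b) t ->
  exists a' b', t = App a' b' /\ tilde_open R a a' /\ tilde_open R b b'.
Proof. intros R HR a b t H. inversion H; subst; eauto.
  match goal with H: R _ _ |- _ => apply HR in H; simpl in H; tauto end. Qed.

Lemma tl_reset_inv : forall R, is_env R -> forall a t, tilde_open R (Reset a) t ->
  exists a', t = Reset a' /\ tilde_open R a a'.
Proof. intros R HR a t H. inversion H; subst; eauto.
  match goal with H: R _ _ |- _ => apply HR in H; simpl in H; tauto end. Qed.

Lemma tl_shift_inv : forall R, is_env R -> forall a t, tilde_open R (Shift a) t ->
  exists a', t = Shift a' /\ tilde_open R a a'.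
Proof. intros R HR a t H. inversion H; subst; eauto.
  match goal with H: R _ _ |- _ => apply HR in H; simpl in H; tauto end. Qed.

Lemma tl_lam_inv : forall R, is_env R -> forall a t, tilde_open R (Lam a) t ->
  (R (Lam a) t /\ exists a', t = Lam a') \/ exists a', t = Lam a' /\ tilde_open R a a'.
Proof. intros R HR a t H. inversion H; subst; eauto.
  left. split; auto. pose proof (HR _ _ H0) as (_ & Hv & _). destruct t; simpl in Hv; try tauto; eauto. Qed.

Definition invX (X : envrel) : envrel :=
  {| X_env := fun E => X_env X (inv E); X_tri := fun E a b => X_tri X (inv E) b a |}.

Lemma add_pair_inv : forall v0 v1 E, inv (add_pair v0 v1 E) = add_pair v1 v0 (inv E).
Proof.
  intros. unfold inv, add_pair. apply functional_extensionality; intro a.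
  apply functional_extensionality; intro b. apply propositional_extensionality. tauto.
Qed.

Lemma bisim_inv : forall X, is_bisim_p X -> is_bisim_p (invX X).
Proof.
  intros X (W1 & W2 & C1 & C2 & C3). unfold is_bisim_p; simpl.
  split; [|split; [|split; [|split]]].
  - intros E H. apply W1 in H. exact (is_env_inv _ H).
  - intros E t0 t1 H. apply W2 in H. destruct H as (H & ? & ?). split; [exact (is_env_inv _ H)|tauto].
  - intros E t0 t1 H Hnp E0 E1 P0 P1 Hh. apply C1; auto. tauto. apply hat_inv; auto.
  - intros E p0 p1 H Hp0 Hp1. split; [|split; [|split]].
  + intros p0' Hs Hp'. destruct (C2 _ _ _ H Hp1 Hp0) as (_ & _ & D & _).
    destruct (D p0' Hs Hp') as (p1' & ? & ? & ?). eauto.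
  + intros v0 Hs Hv. destruct (C2 _ _ _ H Hp1 Hp0) as (_ & _ & _ & D).
    destruct (D v0 Hs Hv) as (v1 & ? & ? & ?). exists v1. rewrite add_pair_inv. auto.
  + intros p0' Hs Hp'. destruct (C2 _ _ _ H Hp1 Hp0) as (D & _).
    destruct (D p0' Hs Hp') as (p1' & ? & ? & ?). eauto.
  + intros v0 Hs Hv. destruct (C2 _ _ _ H Hp1 Hp0) as (_ & D & _).
    destruct (D v0 Hs Hv) as (v1 & ? & ? & ?). exists v1. rewrite add_pair_inv. auto.
  - intros E H b0 b1 HE v0 v1 Hv0 Hv1 Ht. apply C3; auto. apply tilde_inv; auto.
Qed.

Lemma approx_tri_inv : forall E a b, approx_p_tri E a b -> approx_p_tri (inv E) b a.
Proof. intros E a b (X & HX & H). exists (invX X). split. apply bisim_inv; auto. exact H. Qed.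

Lemma approx_env_inv : forall E, approx_p_env E -> approx_p_env (inv E).
Proof. intros E (X & HX & H). exists (invX X). split. apply bisim_inv; auto. exact H. Qed.

Lemma approx_wf : forall E a b, approx_p_tri E a b -> is_env E /\ closed a /\ closed b.
Proof. intros E a b (X & HX & H). destruct HX as (_ & W2 & _). eauto. Qed.

Lemma approx_env_wf : forall E, approx_p_env E -> is_env E.
Proof. intros E (X & HX & H). destruct HX as (W1 & _). eauto. Qed.

Lemma approx_C1 : forall E t0 t1, approx_p_tri E t0 t1 -> ~ (is_program t0 /\ is_program t1) ->
  forall E0 E1, pure E0 -> pure E1 -> hat E E0 E1 ->
  approx_p_tri E (Reset (plug E0 t0)) (Reset (plug E1 t1)).
Proof. intros E t0 t1 (X & HX & H) ? ? ? ? ? ?. exists X. split; auto.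
  destruct HX as (_ & _ & C1 & _). eauto. Qed.

Lemma approx_C2a : forall E p0 p1, approx_p_tri E p0 p1 -> is_program p0 -> is_program p1 ->
  forall p0', step p0 p0' -> is_program p0' ->
  exists p1', steps p1 p1' /\ is_program p1' /\ approx_p_tri E p0' p1'.
Proof. intros E p0 p1 (X & HX & H) ? ? p0' ? ?. pose proof HX as (_ & _ & _ & C2 & _).
  destruct (C2 _ _ _ H H0 H1) as (D & _). destruct (D p0' H2 H3) as (p1' & ? & ? & ?).
  exists p1'. repeat split; auto. exists X; auto. Qed.

Lemma approx_C2b : forall E p0 p1, approx_p_tri E p0 p1 -> is_program p0 -> is_program p1 ->
  forall v0, step p0 v0 -> is_value v0 ->
  exists v1, steps p1 v1 /\ is_value v1 /\ approx_p_env (add_pair v0 v1 E).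
Proof. intros E p0 p1 (X & HX & H) ? ? v0 ? ?. pose proof HX as (_ & _ & _ & C2 & _).
  destruct (C2 _ _ _ H H0 H1) as (_ & D & _). destruct (D v0 H2 H3) as (v1 & ? & ? & ?).
  exists v1. repeat split; auto. exists X; auto. Qed.

Lemma approx_C3 : forall E, approx_p_env E -> forall b0 b1, E (Lam b0) (Lam b1) ->
  forall v0 v1, is_value v0 -> is_value v1 -> tilde E v0 v1 ->
  approx_p_tri E (subst 0 v0 b0) (subst 0 v1 b1).
Proof. intros E (X & HX & H) ? ? ? ? ? ? ? ?. exists X. split; auto.
  destruct HX as (_ & _ & _ & _ & C3). eauto. Qed.

Definition Kact (ES : rel) s0 s1 := exists G0 G1 a0 a1, s0 = plug G0 a0 /\ s1 = plug G1 a1 /\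
  hat ES G0 G1 /\ approx_p_tri ES a0 a1.
Definition Kpas (ES : rel) s0 s1 := approx_p_env ES /\ tilde ES s0 s1.
Definition K ES s0 s1 := Kact ES s0 s1 \/ Kpas ES s0 s1.

Lemma Kact_closed : forall ES s0 s1, Kact ES s0 s1 -> closed s0 /\ closed s1.
Proof. intros ES s0 s1 (G0 & G1 & a0 & a1 & -> & -> & Hh & Ha).
  apply approx_wf in Ha. apply hat_hato in Hh. split; apply closed_plug; tauto. Qed.

Lemma prog_dec : forall t, {is_program t} + {~ is_program t}.
Proof. destruct t; simpl; auto. Qed.

Lemma Kact_norm : forall ES s0 s1, Kact ES s0 s1 -> is_program s0 -> is_program s1 ->
  exists G0 G1 p0 p1, s0 = plug G0 p0 /\ s1 = plug G1 p1 /\ hat ES G0 G1 /\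
    approx_p_tri ES p0 p1 /\ is_program p0 /\ is_program p1.
Proof.
  intros ES s0 s1 HK Hp0 Hp1. pose proof (Kact_closed _ _ _ HK) as [Hc0 Hc1].
  destruct HK as (G0 & G1 & a0 & a1 & -> & -> & Hh & Ha).
  destruct (prog_dec a0) as [Pa0|Pa0]; [destruct (prog_dec a1) as [Pa1|Pa1]|].
  1: exists G0, G1, a0, a1; repeat split; auto.
  all: apply hat_hato in Hh as (Ho & HF0 & HF1).
  all: destruct (pure_dec G0) as [Pu|Pu].
  1,3: exfalso; destruct G0; simpl in *; try tauto; inversion Ho; subst; simpl in *; tauto.
  all: destruct (hato_split _ _ _ Ho Pu) as (G0' & G1' & P0 & P1 & -> & -> & ? & ? & ? & ?).
  all: rewrite plug_comp in Hc0, Hc1 |- *; rewrite plug_comp; simpl in *.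
  all: apply closed_plug_inv in Hc0 as [Hc0 Hc0']; apply closed_plug_inv in Hc1 as [Hc1 Hc1'].
  all: apply closed_plug_inv in Hc0' as [Hc0' _]; apply closed_plug_inv in Hc1' as [Hc1' _].
  all: eexists G0', G1', _, _; split; [reflexivity|]; split; [reflexivity|].
  all: split; [apply hat_hato; auto|].
  all: split; [apply approx_C1; auto; [tauto|apply hat_hato; auto]|simpl; auto].
Qed.

Lemma Kpas_of : forall ES r r1, approx_p_env ES -> tilde_open ES r r1 -> closed r -> closed r1 ->
  K ES r r1 /\ (is_program r -> is_program r1) /\ (is_value r -> is_value r1 /\ Kpas ES r r1).
Proof.
  intros ES r r1 He Ht Hc Hc1. pose proof (approx_env_wf _ He) as HE.
  assert (Kpas ES r r1) by (split; auto; split; auto).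
  split; [right; auto|]. split; [eauto using tl_program|]. intros; split; eauto using tl_value.
Qed.

Lemma prog_plug_CReset : forall F x, is_program (plug F x) -> ~ is_program x -> exists F', F = CReset F'.
Proof. destruct F; simpl; intros; try tauto; eauto. Qed.

Lemma K_step : forall ES s0 s1 r, K ES s0 s1 -> is_program s0 -> is_program s1 -> step s0 r ->
  exists r1 ES', steps s1 r1 /\ (forall a b, ES a b -> ES' a b) /\ K ES' r r1 /\
   (is_program r -> is_program r1) /\ (is_value r -> is_value r1 /\ Kpas ES' r r1).
Proof.
  intros ES s0 s1 r [HK|HK] Hp0 Hp1 Hs.
  - pose proof (Kact_closed _ _ _ HK) as [Hc0 Hc1].
    destruct (Kact_norm _ _ _ HK Hp0 Hp1) as (G0 & G1 & p0 & p1 & -> & -> & Hh & Ha & Pp0 & Pp1).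
    destruct p0 as [| | | |q]; simpl in Pp0; try tauto.
    destruct (step_ctx_inv _ _ _ Hs) as (r' & Hs' & ->).
    destruct (step_program _ _ Hs') as [Pr|[Vr ->]].
    + destruct (approx_C2a _ _ _ Ha Pp0 Pp1 r' Hs' Pr) as (p1' & Hss & Pp1' & Ha').
      exists (plug G1 p1'), ES. split; [apply steps_plug; auto|]. split; auto.
      split; [left; exists G0, G1, r', p1'; auto|].
      split.
      * intros _. destruct G0; inversion Hh; subst; simpl in *; auto.
      * intros Hv. apply plug_value in Hv. destruct r'; simpl in *; tauto.
    + destruct (approx_C2b _ _ _ Ha Pp0 Pp1 r' Hs' Vr) as (v1 & Hss & Vv1 & He).
      exists (plug G1 v1), (add_pair r' v1 ES).
      assert (Hst : steps (plug G1 p1) (plug G1 v1)) by (apply steps_plug; auto).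
      split; auto. split; [intros; right; auto|].
      apply Kpas_of; auto.
      * apply hat_hato in Hh as (Ho & _ & _). apply hato_plug.
        -- eapply hato_mono; [|exact Ho]. intros; apply tl_base; right; auto.
        -- apply tl_base; left; auto.
      * eapply step_closed; eauto.
      * eapply steps_closed; eauto.
  - destruct HK as [He [Ht [Hc0 Hc1]]]. pose proof (approx_env_wf _ He) as HE.
    destruct Hs as [F b v Vv | F E b PE | F v Vv].
    + destruct (tl_decomp _ HE _ _ _ Ht) as (F1 & a1 & -> & Ho & Ha); [simpl; auto|].
      destruct (tl_app_inv _ HE _ _ _ Ha) as (w & u & -> & Hl & Hv).
      pose proof (tl_value _ HE _ _ Hv Vv) as Vu.
      apply closed_plug_inv in Hc0 as [HF0 Ha0]. apply closed_plug_inv in Hc1 as [HF1 Ha1].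
      unfold closed in Ha0, Ha1; simpl in Ha0, Ha1.
      destruct (tl_lam_inv _ HE _ _ Hl) as [[Hb [b1 ->]]|[b1 [-> Hb]]].
      *
        exists (plug F1 (subst 0 u b1)), ES. split; [apply rt_step; constructor; auto|].
        split; auto.
        assert (Hap : approx_p_tri ES (subst 0 v b) (subst 0 u b1)).
        { apply approx_C3; auto. split; auto. unfold closed; tauto. }
        destruct (prog_plug_CReset _ _ Hp0) as [F' ->]; [simpl; tauto|].
        inversion Ho; subst.
        split; [left; eexists (CReset F'), (CReset _), _, _; split; [reflexivity|]; split; [reflexivity|];
          split; [apply hat_hato; simpl; auto|auto]|].
        split; [simpl; auto|]. simpl; tauto.
      * exists (plug F1 (subst 0 u b1)), ES. split; [apply rt_step; constructor; auto|].
        split; auto. apply Kpas_of; auto.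
        -- apply hato_plug; auto. apply tl_subst; auto; unfold closed; tauto.
        -- apply closed_plug; auto. apply closed_subst; auto; tauto.
        -- apply closed_plug; auto. apply closed_subst; auto; tauto.
    + destruct (tl_decomp _ HE _ _ _ Ht) as (F1 & a1 & -> & Ho & Ha); [simpl; auto|].
      destruct (tl_reset_inv _ HE _ _ Ha) as (y & -> & Hy).
      destruct (tl_decomp _ HE _ _ _ Hy) as (E1 & y' & -> & HoE & Hy'); [simpl; auto|].
      destruct (tl_shift_inv _ HE _ _ Hy') as (b1 & -> & Hb).
      apply closed_plug_inv in Hc0 as [HF0 Ha0]. apply closed_plug_inv in Hc1 as [HF1 Ha1].
      unfold closed in Ha0, Ha1; simpl in Ha0, Ha1.
      apply closed_plug_inv_at in Ha0 as [HE0 Hb0]. apply closed_plug_inv_at in Ha1 as [HE1 Hb1].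
      simpl in Hb0, Hb1.
      rewrite (liftC_closed E) by auto.
      assert (PE1 : pure E1) by (eapply hato_pure; eauto).
      exists (plug F1 (Reset (subst 0 (Lam (Reset (plug E1 (Var 0)))) b1))), ES.
      split.
      { apply rt_step. pose proof (step_shift F1 E1 b1 PE1) as Hst. rewrite (liftC_closed E1) in Hst by auto. exact Hst. }
      split; auto.
      assert (Cu0 : closed (Lam (Reset (plug E (Var 0))))).
      { unfold closed; simpl. apply closed_plug_at; [eapply closed_ctx_mono; eauto|simpl; lia]. }
      assert (Cu1 : closed (Lam (Reset (plug E1 (Var 0))))).
      { unfold closed; simpl. apply closed_plug_at; [eapply closed_ctx_mono; eauto|simpl; lia]. }
      apply Kpas_of; auto.
      * apply hato_plug; auto. apply tl_reset. apply tl_subst; auto.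
        apply tl_lam. apply tl_reset. apply hato_plug; auto. apply tl_var.
      * apply closed_plug; auto. unfold closed; simpl. apply closed_subst; auto.
      * apply closed_plug; auto. unfold closed; simpl. apply closed_subst; auto.
    + destruct (tl_decomp _ HE _ _ _ Ht) as (F1 & a1 & -> & Ho & Ha); [simpl; auto|].
      destruct (tl_reset_inv _ HE _ _ Ha) as (u & -> & Hu).
      pose proof (tl_value _ HE _ _ Hu Vv) as Vu.
      apply closed_plug_inv in Hc0 as [HF0 Ha0]. apply closed_plug_inv in Hc1 as [HF1 Ha1].
      exists (plug F1 u), ES. split; [apply rt_step; apply step_reset; auto|].
      split; auto. apply Kpas_of; auto; [apply hato_plug; auto| |]; apply closed_plug; auto.
Qed.

Definition Xp_env (E : rel) := is_env E /\ exists ES, approx_p_env ES /\ (forall a b, E a b -> tilde ES a b).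
Definition Xp_tri (E : rel) s0 s1 := is_env E /\ closed s0 /\ closed s1 /\
  exists ES, (forall a b, E a b -> tilde ES a b) /\ K ES s0 s1.
Definition Xp : envrel := {| X_env := Xp_env; X_tri := Xp_tri |}.

Lemma tilde_mono_env : forall (E ES : rel), (forall a b, E a b -> tilde ES a b) ->
  forall x y, tilde E x y -> tilde ES x y.
Proof. intros E ES H x y [Ht Hc]. split; auto. eapply tl_mono; [|exact Ht].
  intros a b Hab. apply (proj1 (H a b Hab)). Qed.

Lemma tilde_mono_sub : forall (E ES : rel), (forall a b, E a b -> ES a b) ->
  forall x y, tilde E x y -> tilde ES x y.
Proof. intros E ES H x y [Ht Hc]. split; auto. eapply tl_mono; [|exact Ht].
  intros a b Hab. apply tl_base; auto. Qed.

Lemma K_inv : forall ES s0 s1, K ES s0 s1 -> K (inv ES) s1 s0.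
Proof.
  intros ES s0 s1 [(G0 & G1 & a0 & a1 & -> & -> & Hh & Ha)|[He Ht]].
  - left. exists G1, G0, a1, a0. repeat split; auto. apply hat_inv; auto. apply approx_tri_inv; auto.
  - right. split. apply approx_env_inv; auto. apply tilde_inv; auto.
Qed.

Lemma Xp_tri_inv : forall E s0 s1, Xp_tri E s0 s1 -> Xp_tri (inv E) s1 s0.
Proof.
  intros E s0 s1 (HE & Hc0 & Hc1 & ES & Hsub & HK). split; [apply is_env_inv; auto|].
  split; auto. split; auto. exists (inv ES). split; [|apply K_inv; auto].
  intros a b Hab. apply tilde_inv. apply Hsub. exact Hab.
Qed.

Lemma Xp_env_inv : forall E, Xp_env E -> Xp_env (inv E).
Proof.
  intros E (HE & ES & He & Hsub). split; [apply is_env_inv; auto|]. exists (inv ES).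
  split; [apply approx_env_inv; auto|]. intros a b Hab. apply tilde_inv. apply Hsub. exact Hab.
Qed.

Lemma left_a : forall E p0 p1, Xp_tri E p0 p1 -> is_program p0 -> is_program p1 ->
  forall p0', step p0 p0' -> is_program p0' ->
  exists p1', steps p1 p1' /\ is_program p1' /\ Xp_tri E p0' p1'.
Proof.
  intros E p0 p1 (HE & Hc0 & Hc1 & ES & Hsub & HK) Pp0 Pp1 p0' Hs Pp0'.
  destruct (K_step _ _ _ _ HK Pp0 Pp1 Hs) as (r1 & ES' & Hss & Hmon & HK' & Hpr & _).
  exists r1. split; auto. split; auto. split; auto.
  split; [eapply step_closed; eauto|]. split; [eapply steps_closed; eauto|].
  exists ES'. split; auto. intros a b Hab. eapply tilde_mono_sub; eauto.
Qed.

Lemma left_b : forall E p0 p1, Xp_tri E p0 p1 -> is_program p0 -> is_program p1 ->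
  forall v0, step p0 v0 -> is_value v0 ->
  exists v1, steps p1 v1 /\ is_value v1 /\ Xp_env (add_pair v0 v1 E).
Proof.
  intros E p0 p1 (HE & Hc0 & Hc1 & ES & Hsub & HK) Pp0 Pp1 v0 Hs Vv0.
  destruct (K_step _ _ _ _ HK Pp0 Pp1 Hs) as (r1 & ES' & Hss & Hmon & HK' & _ & Hv).
  destruct (Hv Vv0) as (Vr1 & He' & Ht').
  exists r1. split; auto. split; auto. split.
  - intros a b [[-> ->]|Hab]; [destruct Ht' as (_ & ? & ?); auto|]. apply HE; auto.
  - exists ES'. split; auto. intros a b [[-> ->]|Hab]; auto. eapply tilde_mono_sub; eauto.
Qed.

Lemma Xp_bisim : is_bisim_p Xp.
Proof.
  unfold is_bisim_p; simpl. split; [|split; [|split; [|split]]].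
  - intros E H; apply H.
  - intros E t0 t1 H; destruct H as (? & ? & ? & _); auto.
  - intros E t0 t1 (HE & Hc0 & Hc1 & ES & Hsub & HK) Hnp E0 E1 P0 P1 Hh.
    apply hat_hato in Hh as (Ho & HF0 & HF1).
    assert (Ho' : hato ES E0 E1).
    { eapply hato_mono; [|exact Ho]. intros a b Hab. apply (proj1 (Hsub a b Hab)). }
    assert (C0 : closed (Reset (plug E0 t0))) by (unfold closed; simpl; apply closed_plug; auto).
    assert (C1 : closed (Reset (plug E1 t1))) by (unfold closed; simpl; apply closed_plug; auto).
    split; auto. split; auto. split; auto. exists ES. split; auto.
    destruct HK as [(G0 & G1 & a0 & a1 & -> & -> & Hh & Ha)|[He Ht]].
    + left. exists (CReset (comp E0 G0)), (CReset (comp E1 G1)), a0, a1.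
      simpl. rewrite !plug_comp. split; auto. split; auto. split; auto.
      apply hat_hato. apply hat_hato in Hh as (HoG & _ & _).
      rewrite <- !plug_comp in C0, C1.
      apply closed_plug_inv in C0 as [C0 _]. apply closed_plug_inv in C1 as [C1 _].
      simpl in C0, C1. split; [|simpl; auto]. constructor. apply hato_comp; auto.
    + right. split; auto. split; auto. apply tl_reset. apply hato_plug; auto. apply Ht.
  - intros E p0 p1 H Pp0 Pp1. split; [|split; [|split]].
    + eapply left_a; eauto.
    + eapply left_b; eauto.
    + intros p1' Hs Pp1'. destruct (left_a _ _ _ (Xp_tri_inv _ _ _ H) Pp1 Pp0 p1' Hs Pp1') as (p0' & ? & ? & H').
      exists p0'. split; auto. split; auto. exact (Xp_tri_inv _ _ _ H').
    + intros v1 Hs Vv1. destruct (left_b _ _ _ (Xp_tri_inv _ _ _ H) Pp1 Pp0 v1 Hs Vv1) as (v0 & ? & ? & H').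
      exists v0. split; auto. split; auto. apply Xp_env_inv in H'. rewrite add_pair_inv in H'. exact H'.
  - intros E (HE & ES & He & Hsub) b0 b1 Hb v0 v1 Vv0 Vv1 Hv.
    pose proof (HE _ _ Hb) as (_ & _ & Cb0 & Cb1). unfold closed in Cb0, Cb1; simpl in Cb0, Cb1.
    pose proof (tilde_mono_env _ _ Hsub _ _ Hv) as Hv'.
    destruct Hv as (_ & Cv0 & Cv1).
    split; auto. split; [apply closed_subst; auto|]. split; [apply closed_subst; auto|].
    exists ES. split; auto.
    pose proof (approx_env_wf _ He) as HES.
    destruct (Hsub _ _ Hb) as (Ht & _ & _).
    destruct (tl_lam_inv _ HES _ _ Ht) as [[HB [b1' Heq]]|[b1' [Heq Hb']]]; injection Heq; intros <-.
    + left. exists Hole, Hole, (subst 0 v0 b0), (subst 0 v1 b1). repeat split; try constructor.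
      apply approx_C3; auto.
    + right. split; auto. split; [|split; apply closed_subst; auto].
      apply tl_subst; auto. apply Hv'.
Qed.

Theorem lemma14 :
  forall (E : rel) (t0 t1 : term),
    is_env E -> closed t0 -> closed t1 ->
    approx_p_tri E t0 t1 ->
    forall F : ctx, closed_ctx F ->
      approx_p_tri E (plug F t0) (plug F t1).
Proof.
  intros E t0 t1 HE Hc0 Hc1 Ha F HF. exists Xp. split; [apply Xp_bisim|].
  simpl. split; auto. split; [apply closed_plug; auto|]. split; [apply closed_plug; auto|].
  exists E. split.
  - intros a b Hab. pose proof (HE _ _ Hab) as (_ & _ & ? & ?). split; auto. apply tl_base; auto.
  - left. exists F, F, t0, t1. repeat split; auto. apply hat_hato. split; auto. apply hato_refl.
Qed.
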